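(* Let $R$ be a ring with identity. The following are equivalent: (1) $R$ is von Neumann regular; (2) the matrix ring $\mathbb{M}_2(R)$ is SSP; (3) $\mathbb{M}_n(R)$ is SSP for some $n>1$; (4) $\mathbb{M}_n(R)$ is SSP for every $n>1$.
   Context: Rings are associative with identity. $\mathbb{M}_n(R)$ is the ring of $n\times n$ matrices over $R$. A ring $R$ is von Neumann regular if for every $a\in R$ there is $b\in R$ with $a=aba$. A ring $S$ is right SSP if the sum of any two direct summands of $S_S$ is again a direct summand of $S_S$; left SSP analogously with ${}_SS$; $S$ is SSP if it is both right and left SSP. *)

(* Defs.v *)
From mathcomp Require Import all_boot all_order all_algebra.
Set Implicit Arguments. Unset Strict Implicit. Unset Printing Implicit Defensive.
Import GRing.Theory.
Local Open Scope ring_scope.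

(* Rings are associative with identity: R : pzRingType (zero ring allowed). *)

Definition vN_regular (R : pzRingType) : Prop :=
  forall a : R, exists b : R, a = a * b * a.

(* Submodules of the regular right module S_S = right ideals (as sets). *)
Definition right_ideal (S : pzRingType) (I : S -> Prop) : Prop :=
  [/\ I 0, (forall x y, I x -> I y -> I (x + y)) & (forall x r, I x -> I (x * r))].

(* Submodules of the regular left module _S S = left ideals. *)
Definition left_ideal (S : pzRingType) (I : S -> Prop) : Prop :=
  [/\ I 0, (forall x y, I x -> I y -> I (x + y)) & (forall x r, I x -> I (r * x))].

Definition sum_sub (S : pzRingType) (I J : S -> Prop) : S -> Prop :=
  fun s => exists a b, [/\ I a, J b & s = a + b].

Definition summand_of (S : pzRingType) (sub : (S -> Prop) -> Prop) (I : S -> Prop)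
  : Prop :=
  sub I /\ exists J, [/\ sub J, (forall x, I x -> J x -> x = 0)
                      & (forall s, sum_sub I J s)].

Definition right_summand (S : pzRingType) := summand_of (@right_ideal S).
Definition left_summand (S : pzRingType) := summand_of (@left_ideal S).

Definition right_SSP (S : pzRingType) : Prop :=
  forall I J : S -> Prop, right_summand I -> right_summand J ->
    right_summand (sum_sub I J).

Definition left_SSP (S : pzRingType) : Prop :=
  forall I J : S -> Prop, left_summand I -> left_summand J ->
    left_summand (sum_sub I J).

Definition SSP (S : pzRingType) : Prop := right_SSP S /\ left_SSP S.

(* Main.v *)
Require Import Defs.
From mathcomp Require Import all_boot all_order all_algebra.
Set Implicit Arguments. Unset Strict Implicit. Unset Printing Implicit Defensive.
Import GRing.Theory.
Local Open Scope ring_scope.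

Section Gen.
Variable S : pzRingType.

Lemma rid_opp (I : S -> Prop) : right_ideal I -> forall x, I x -> I (- x).
Proof. by case=> _ _ HM x Hx; rewrite -mulrN1; apply: HM. Qed.

Lemma summand_idem (I : S -> Prop) : right_summand I ->
  exists e : S, e * e = e /\ (forall x, I x <-> exists s, x = e * s).
Proof.
case=> HI [J [HJ Hint Hsum]].
have [e [f [Ie Jf E1]]] := Hsum 1.
have key : forall x, I x -> x = e * x.
  move=> x Ix.
  have Jfx : J (f * x) by case: HJ => _ _ H; apply: H.
  have Ifx : I (f * x).
    have -> : f * x = x - e * x by rewrite -[x in x - _]mul1r E1 mulrDl [e * x + _]addrC addrK.
    case: (HI) => _ HD HM; apply: HD => //; apply: rid_opp => //; exact: HM.
  have := Hint _ Ifx Jfx => H0.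
  by rewrite -[x in LHS]mul1r E1 mulrDl H0 addr0.
exists e; split; first by rewrite -key.
move=> x; split; first by move=> /key ->; exists x.
by case=> s ->; case: HI => _ _ H; apply: H.
Qed.

Lemma idem_summand (K : S -> Prop) (h : S) : h * h = h ->
  (forall x, K x <-> exists s, x = h * s) -> right_summand K.
Proof.
move=> hh HK.
have KP : right_ideal K.
  split.
  - by apply/HK; exists 0; rewrite mulr0.
  - move=> x y /HK [s ->] /HK [t ->]; apply/HK; exists (s + t); by rewrite mulrDr.
  - move=> x r /HK [s ->]; apply/HK; exists (s * r); by rewrite mulrA.
split=> //.
exists (fun x => exists s, x = (1 - h) * s); split.
- split.
  + by exists 0; rewrite mulr0.
  + move=> x y [s ->] [t ->]; exists (s + t); by rewrite mulrDr.
  + move=> x r [s ->]; exists (s * r); by rewrite mulrA.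
- move=> x /HK [s Hs] [t Ht].
  have : h * x = x by rewrite Hs mulrA hh.
  by rewrite {1}Ht mulrA mulrBr mulr1 hh subrr mul0r.
- move=> s; exists (h * s), ((1 - h) * s); split.
  + by apply/HK; exists s.
  + by exists s.
  + by rewrite -mulrDl addrC subrK mul1r.
Qed.

Lemma reg_rSSP : vN_regular S -> right_SSP S.
Proof.
move=> reg I J /summand_idem [e [ee HI]] /summand_idem [g [gg HJ]].
pose x := (1 - e) * g. have xdef : x = (1 - e) * g by []. clearbody x.
have [y xyx] := reg x.
pose p := x * y. have pdef : p = x * y by []. clearbody p.
pose q := p * (1 - e). have qdef : q = p * (1 - e) by []. clearbody q.
pose h := e + q. have hdef : h = e + q by []. clearbody h.
have ex : e * x = 0 by rewrite xdef mulrA mulrBr mulr1 ee subrr mul0r.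
have eq0 : e * q = 0 by rewrite qdef pdef !mulrA ex !mul0r.
have qe : q * e = 0 by rewrite qdef -mulrA mulrBl mul1r ee subrr mulr0.
have ep : (1 - e) * p = p by rewrite mulrBl mul1r pdef mulrA ex mul0r subr0.
have pp : p * p = p by rewrite pdef mulrA -xyx.
have qq : q * q = q.
  by rewrite qdef -mulrA (mulrA (1 - e)) ep mulrA pp.
have hh : h * h = h.
  by rewrite hdef mulrDl !mulrDr ee eq0 qe qq addr0 add0r.
have he : h * e = e by rewrite hdef mulrDl ee qe addr0.
have hx : h * x = x.
  rewrite hdef mulrDl ex add0r qdef -mulrA.
  have -> : (1 - e) * x = x by rewrite mulrBl mul1r ex subr0.
  by rewrite pdef -xyx.
have hg : h * g = g.
  have -> : g = e * g + x by rewrite xdef mulrBl mul1r addrC subrK.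
  by rewrite mulrDr mulrA he hx.
apply: (idem_summand hh) => z; split.
- case=> i [j [/HI [s1 ->] /HJ [s2 ->] ->]].
  by exists (e * s1 + g * s2); rewrite mulrDr !mulrA he hg.
- case=> s ->; exists (e * (s - g * (y * ((1 - e) * s)))), (g * (y * ((1 - e) * s))).
  split.
  + by apply/HI; eexists.
  + by apply/HJ; eexists.
  + rewrite hdef mulrDl mulrBr -addrA; congr (_ + _).
    rewrite addrC (mulrA e g) -mulrBl -{1}[g]mul1r -mulrBl -xdef qdef pdef.
    by rewrite !mulrA.
Qed.

End Gen.

Lemma reg_conv (S : pzRingType) : vN_regular S -> vN_regular S^c.
Proof. move=> reg a; have [b E] := reg a; exists b; rewrite /= -mulrA; exact: E. Qed.

Lemma reg_SSP (S : pzRingType) : vN_regular S -> SSP S.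
Proof.
move=> reg; split; first exact: reg_rSSP.
exact: (reg_rSSP (reg_conv reg)).
Qed.
Section Mat.
Variable R : pzRingType.
Hypothesis reg : vN_regular R.

Definition mreg m n (A : 'M[R]_(m, n)) := exists G : 'M_(n, m), A *m G *m A = A.

Lemma lem15 m n (A : 'M[R]_(m, n)) (Y : 'M_(n, m)) :
  mreg (A - A *m Y *m A) -> mreg A.
Proof.
case=> G HG.
exists (Y + (1%:M - Y *m A) *m G *m (1%:M - A *m Y)).
have E1 : A *m (1%:M - Y *m A) = A - A *m Y *m A by rewrite mulmxBr mulmx1 mulmxA.
have E2 : (1%:M - A *m Y) *m A = A - A *m Y *m A by rewrite mulmxBl mul1mx.
rewrite mulmxDr mulmxDl !mulmxA E1 -!mulmxA E2 !mulmxA HG.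
by rewrite addrC subrK.
Qed.

Lemma mreg11 (M : 'M[R]_(1, 1)) : mreg M.
Proof.
have [r Hr] := reg (M ord0 ord0).
exists (r%:M); apply/matrixP => i j; rewrite !ord1 !mxE big_ord1 !mxE big_ord1 mxE.
by rewrite eqxx mulr1n -Hr.
Qed.

Lemma mreg_col m (c : 'M[R]_(m, 1)) : mreg c.
Proof.
elim: m c => [|m IH] c.
  by exists 0; rewrite [LHS]flatmx0 [RHS]flatmx0.
have Hc := vsubmxK (c : 'M_(1 + m, 1)).
set x := usubmx _ in Hc; set c' := dsubmx _ in Hc.
have [g' Hg'] := IH c'.
change (mreg (c : 'M_(1 + m, 1))); apply: (@lem15 _ _ _ (row_mx 0 g')).
rewrite -Hc -mulmxA mul_row_col mul0mx add0r mul_col_mx !mulmxA Hg'.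
rewrite opp_col_mx add_col_mx subrr.
have [gx Hgx] := mreg11 (x - x *m g' *m c').
exists (row_mx gx 0).
by rewrite -mulmxA mul_row_col mulmx0 addr0 mul_col_mx mul0mx !mulmxA Hgx.
Qed.

Lemma mreg_all n m (A : 'M[R]_(m, n)) : mreg A.
Proof.
elim: n m A => [|n IH] m A.
  by exists 0; rewrite [LHS]thinmx0 [RHS]thinmx0.
have HA := hsubmxK (A : 'M_(m, 1 + n)).
set a := lsubmx _ in HA; set B := rsubmx _ in HA.
have [H HH] := IH _ B.
change (mreg (A : 'M_(m, 1 + n))); apply: (@lem15 _ _ _ (col_mx 0 H)).
rewrite -HA mul_row_col mulmx0 add0r mul_mx_row HH.
rewrite opp_row_mx add_row_mx subrr.
have [gc Hgc] := mreg_col (a - B *m H *m a).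
exists (col_mx gc 0).
by rewrite mul_row_col mul0mx addr0 mul_mx_row Hgc mulmx0.
Qed.

Lemma reg_mat n : vN_regular 'M[R]_n.
Proof. by move=> A; have [G HG] := mreg_all A; exists G; rewrite -!mulmxE HG. Qed.

End Mat.
Lemma SSP_reg (R : pzRingType) n : right_SSP 'M[R]_(n.+2) -> vN_regular R.
Proof.
move=> H a.
pose i0 : 'I_n.+2 := ord0.
pose i1 : 'I_n.+2 := Ordinal (isT : (1 < n.+2)%N).
have i10 : (i1 == i0) = false by [].
pose I := fun M : 'M[R]_(n.+2) => forall j, M i1 j = 0.
pose J := fun M : 'M[R]_(n.+2) => (forall j, M i1 j = a * M i0 j) /\
   (forall i j, i != i0 -> i != i1 -> M i j = 0).
have sI : right_summand I.
  split.
    split.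
    - by move=> j; rewrite mxE.
    - by move=> x y Hx Hy j; rewrite mxE Hx Hy addr0.
    - move=> x r Hx j; rewrite -mulmxE mxE big1 // => k _; by rewrite Hx mul0r.
  exists (fun M : 'M[R]_(n.+2) => forall i j, i != i1 -> M i j = 0); split.
  - split.
    + by move=> i j _; rewrite mxE.
    + by move=> x y Hx Hy i j Hi; rewrite mxE Hx // Hy // addr0.
    + move=> x r Hx i j Hi; rewrite -mulmxE mxE big1 // => k _; by rewrite Hx // mul0r.
  - move=> x Hx Hx'; apply/matrixP => i j; rewrite mxE.
    by case: (eqVneq i i1) => [->|Hi]; [apply: Hx | apply: Hx'].
  - move=> M; exists (\matrix_(i, j) (if i == i1 then 0 else M i j)),
      (\matrix_(i, j) (if i == i1 then M i j else 0)); split.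
    + by move=> j; rewrite mxE eqxx.
    + by move=> i j Hi; rewrite mxE (negPf Hi).
    + by apply/matrixP => i j; rewrite !mxE; case: (i == i1); rewrite ?add0r ?addr0.
have sJ : right_summand J.
  split.
    split.
    - by split=> [j|i j _ _]; rewrite !mxE ?mulr0.
    - move=> x y [Hx1 Hx2] [Hy1 Hy2]; split=> [j|i j Hi0 Hi1].
        by rewrite !mxE Hx1 Hy1 mulrDr.
      by rewrite mxE Hx2 // Hy2 // addr0.
    - move=> x r [Hx1 Hx2]; split=> [j|i j Hi0 Hi1]; rewrite -mulmxE !mxE.
        rewrite mulr_sumr; apply: eq_bigr => k _; by rewrite Hx1 mulrA.
      by rewrite big1 // => k _; rewrite Hx2 // mul0r.
  exists (fun M : 'M[R]_(n.+2) => forall j, M i0 j = 0); split.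
  - split.
    + by move=> j; rewrite mxE.
    + by move=> x y Hx Hy j; rewrite mxE Hx Hy addr0.
    + move=> x r Hx j; rewrite -mulmxE mxE big1 // => k _; by rewrite Hx mul0r.
  - move=> x [Hx1 Hx2] Hx'; apply/matrixP => i j; rewrite mxE.
    case: (eqVneq i i0) => [->|Hi0]; first exact: Hx'.
    case: (eqVneq i i1) => [->|Hi1]; last exact: Hx2.
    by rewrite Hx1 Hx' mulr0.
  - move=> M; pose P := \matrix_(i, j) (if i == i0 then M i0 j else
                         if i == i1 then a * M i0 j else 0).
    exists P, (M - P); split.
    + split=> [j|i j Hi0 Hi1]; rewrite !mxE ?i10 ?eqxx //.
      by rewrite (negPf Hi0) (negPf Hi1).
    + by move=> j; rewrite !mxE eqxx subrr.
    + by rewrite addrC subrK.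
have [[_ _ KM] [L [[_ _ LM] Hint Hsum]]] := H I J sI sJ.
have [k [l [Kk Ll E1]]] := Hsum 1.
pose m := \matrix_(i, j) (if (i == i1) && (j == i0) then a else 0 : R).
have Km : sum_sub I J m.
  pose jj := \matrix_(i, j) (if j == i0 then (if i == i0 then 1 else
                              if i == i1 then a else 0) else 0 : R).
  exists (m - jj), jj; split.
  - move=> j; rewrite !mxE eqxx i10 /=.
    by case: (j == i0); rewrite subrr.
  - split=> [j|i j Hi0 Hi1]; rewrite !mxE ?eqxx ?i10.
      by case: (j == i0); rewrite ?mulr1 ?mulr0.
    by rewrite (negPf Hi0) (negPf Hi1); case: (j == i0).
  - by rewrite subrK.
have Em : m = k * m.
  have Klm : L (l * m) by apply: LM.
  have Kkm : sum_sub I J (m - k * m).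
    have -> : m - k * m = m * 1 + (k * m) * (- 1) by rewrite mulr1 mulrN1.
    have HD : forall x y, sum_sub I J x -> sum_sub I J y -> sum_sub I J (x + y).
      by case: (H I J sI sJ) => [[_ HD _] _].
    apply: (HD); apply: (KM) => //; exact: (KM).
  have : m - k * m = l * m by rewrite -[m in m - _]mul1r E1 mulrDl addrC addKr.
  move=> Heq; rewrite Heq in Kkm.
  have := Hint _ Kkm Klm => H0.
  by apply/eqP; rewrite -subr_eq0 Heq H0.
case: Kk => i' [j' [Ii' [Jj1 _] Ek]].
exists (j' i0 i1).
have := congr1 (fun M : 'M[R]_(n.+2) => M i1 i0) Em.
rewrite /= -mulmxE !mxE (bigD1 i1) //= big1; last first.
  by move=> t Ht; rewrite /m mxE (negPf Ht) /= mulr0.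
rewrite /m mxE !eqxx /= addr0 Ek mxE Ii' add0r Jj1 => <-.
done.
Qed.

Theorem theorem2p14 (R : pzRingType) :
  [<-> vN_regular R;
       SSP 'M[R]_2;
       exists n : nat, (1 < n)%N /\ SSP 'M[R]_n;
       forall n : nat, (1 < n)%N -> SSP 'M[R]_n].
Proof.
have k1 : vN_regular R -> forall n, SSP 'M[R]_n.
  by move=> reg n; apply: reg_SSP; apply: reg_mat.
have k2 : forall n, (1 < n)%N -> SSP 'M[R]_n -> vN_regular R.
  by move=> [|[|n]] // _ [HR _]; apply: (@SSP_reg R n).
tfae.
- by move=> /k1.
- by move=> H; exists 2%N.
- by case=> n [Hn /(k2 n Hn) /k1].
- by move=> H; apply: (k2 2%N) => //; apply: H.
Qed.
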